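(* Let $L$ be a right pre-Lie algebra over $k$ and let $(S(L),\ast)$ be the Guin--Oudom presentation of its enveloping algebra. For arbitrary $l_1,\ldots,l_n\in L$ one has, in $S(L)$, $$ l_1\cdots l_n=\sum_{\{P_1,\ldots,P_k\}}(-1)^{n-k}\,l_{P_1}\ast\cdots\ast l_{P_k}, $$ where the left-hand side is the commutative product in $S(L)$, the sum runs over all set partitions $\{P_1,\ldots,P_k\}$ of $\{1,\ldots,n\}$ with blocks indexed so that $\max P_1<\max P_2<\cdots<\max P_k$, and for a block $P_i=\{p_1<\cdots<p_h\}$, $$ l_{P_i}:=\sum_{\sigma\in S_{h-1}} l_{p_{\sigma(1)}}\curvearrowleft\Big(l_{p_{\sigma(2)}}\curvearrowleft\big(\cdots\curvearrowleft(l_{p_{\sigma(h-1)}}\curvearrowleft l_{p_h})\cdots\big)\Big) $$ (for $h=1$, $l_{P_i}=l_{p_1}$).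
   Context: $k$ is a field of characteristic zero. A right pre-Lie algebra is a vector space $L$ with a bilinear product $\curvearrowleft$ satisfying $(x\curvearrowleft y)\curvearrowleft z-x\curvearrowleft(y\curvearrowleft z)=(x\curvearrowleft z)\curvearrowleft y-x\curvearrowleft(z\curvearrowleft y)$ for all $x,y,z\in L$. $S(L)$ is the symmetric algebra on $L$ (commutative product written as juxtaposition, unit $1$). The pre-Lie product is extended to an action of $S(L)$ on $L$ recursively: $l\curvearrowleft 1=l$ and, for $l,l_1,\ldots,l_n\in L$, $l\curvearrowleft(l_1\cdots l_n)=(l\curvearrowleft(l_1\cdots l_{n-1}))\curvearrowleft l_n-\sum_{i=1}^{n-1}l\curvearrowleft(l_1\cdots l_{i-1}(l_i\curvearrowleft l_n)l_{i+1}\cdots l_{n-1})$. The Guin--Oudom product $\ast$ on $S(L)$ is the bilinear product with unit $1$ given by $(a_1\cdots a_n)\ast(b_1\cdots b_m)=\sum_f B_0\,(a_1\curvearrowleft B_1)\cdots(a_n\curvearrowleft B_n)$ for $a_i,b_j\in L$, the sum over all maps $f:\{1,\ldots,m\}\to\{0,\ldots,n\}$, with $B_i=\prod_{j\in f^{-1}(i)}b_j$ (empty product $=1$). It is associative and $(S(L),\ast)$ is isomorphic to the universal enveloping algebra of the Lie algebra $(L,[a,b]=a\curvearrowleft b-b\curvearrowleft a)$. *)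

(* Defs.v *)
From HB Require Import structures.
From mathcomp Require Import all_boot all_order all_algebra all_fingroup.
From mathcomp Require Import finmap.
From mathcomp.multinomials Require Import monalg.

Set Implicit Arguments.
Unset Strict Implicit.
Unset Printing Implicit Defensive.

Import GRing.Theory.
Local Open Scope ring_scope.

(* Model of S(L):  S(L) = F / symker, where F = {malg k[seq L]} is the free
   k-vector space on words of elements of L (word w ~ commutative monomial)
   and symker is the k-subspace spanned by the multilinearity relations and
   the commutativity (permutation) relations.  Equality in S(L) of (the classes
   of) u, v in F is  symker (u - v). *)

Section GuinOudom.
Variables (k : fieldType) (L : lmodType k) (pl : L -> L -> L).

Definition word (s : seq L) : {malg k[seq L]} := << s >>.

Inductive symker : {malg k[seq L]} -> Prop :=
| symker0 : symker 0
| symkerD x y : symker x -> symker y -> symker (x + y)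
| symkerZ (a : k) x : symker x -> symker (a *: x)
| symker_perm (s t : seq L) : perm_eq s t -> symker (word s - word t)
| symker_lin (s t : seq L) (a : k) (x y : L) :
    symker (word (s ++ (a *: x + y) :: t) - a *: word (s ++ x :: t)
            - word (s ++ y :: t)).

(* Recursive extension of the pre-Lie product to an action of words:
   l <~ 1 = l, and
   l <~ (l_1...l_n) = (l <~ (l_1...l_{n-1})) <~ l_n
        - sum_{i<n} l <~ (l_1 ... (l_i <~ l_n) ... l_{n-1}).
   (the fuel m is the length of the word) *)
Fixpoint act_aux (m : nat) (x : L) (s : seq L) : L :=
  match m with
  | 0 => x
  | m'.+1 =>
    match s with
    | [::] => x
    | _ =>
      let ln := last 0 s in
      let init := take (size s).-1 s in
      pl (act_aux m' x init) ln
      - \sum_(i < size init)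
          act_aux m' x (set_nth 0 init i (pl (nth 0 init i) ln))
    end
  end.

Definition act (x : L) (s : seq L) : L := act_aux (size s) x s.

(* Guin--Oudom product of two monomials a_1...a_n and b_1...b_m :
   sum over f : {1..m} -> {0..n} of B_0 (a_1 <~ B_1) ... (a_n <~ B_n). *)
Definition GO_block (a b : seq L) (f : {ffun 'I_(size b) -> 'I_(size a).+1})
  (i : nat) : seq L :=
  [seq nth 0 b (val j) | j <- enum 'I_(size b) & val (f j) == i].

Definition GO_word (a b : seq L) : {malg k[seq L]} :=
  \sum_(f : {ffun 'I_(size b) -> 'I_(size a).+1})
     word (GO_block f 0 ++
           [seq act (nth 0 a i) (GO_block f i.+1) | i <- iota 0 (size a)]).

Definition GO_prod (u v : {malg k[seq L]}) : {malg k[seq L]} :=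
  \sum_(s <- msupp u) \sum_(t <- msupp v) (u@_s * v@_t) *: GO_word s t.

Definition GO_iter (xs : seq L) : {malg k[seq L]} :=
  foldl (fun acc x => GO_prod acc (word [:: x])) (word [::]) xs.

Section Partition.
Variables (n : nat) (l : 'I_n -> L).

Definition lblock (A : {set 'I_n}) : L :=
  match [seq i <- enum 'I_n | i \in A] with
  | [::] => 0
  | p :: ps =>
    let r := belast p ps in
    \sum_(sigma : 'S_(size r))
       foldr pl (l (last p ps))
             [seq l (nth p r (sigma i)) | i <- enum 'I_(size r)]
  end.

Definition blockmax (A : {set 'I_n}) : nat := \max_(i in A) (val i).

Definition sorted_blocks (P : {set {set 'I_n}}) : seq {set 'I_n} :=
  sort (fun A B => blockmax A <= blockmax B)%N (enum P).

End Partition.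
End GuinOudom.

(* Main.v *)
Require Import Defs.
From HB Require Import structures.
From mathcomp Require Import all_boot all_order all_algebra all_fingroup.
From mathcomp Require Import finmap.
From mathcomp.multinomials Require Import monalg.
From mathcomp Require Import zify.
Set Implicit Arguments.
Unset Strict Implicit.
Unset Printing Implicit Defensive.
Import GRing.Theory.
Local Open Scope ring_scope.


Section Basic.
Variables (k : fieldType) (L : lmodType k).
Local Notation M := {malg k[seq L]}.
Local Notation symker := (@symker k L).
Local Notation word := (@word k L).

Lemma symkerN u : symker u -> symker (- u).
Proof. by move=> h; rewrite -scaleN1r; apply: symkerZ. Qed.

Lemma symkerB u v : symker u -> symker v -> symker (u - v).
Proof. by move=> hu hv; apply: symkerD => //; apply: symkerN. Qed.

Definition eqv (u v : M) := symker (u - v).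

Lemma eqv_refl u : eqv u u.
Proof. by rewrite /eqv subrr; apply: symker0. Qed.

Lemma eqv_sym u v : eqv u v -> eqv v u.
Proof. by rewrite /eqv => /symkerN; rewrite opprB. Qed.

Lemma eqv_trans u v w : eqv u v -> eqv v w -> eqv u w.
Proof.
move=> h1 h2; have := symkerD h1 h2.
by rewrite /eqv addrA subrK.
Qed.

Lemma eqv_add u1 u2 v1 v2 : eqv u1 v1 -> eqv u2 v2 -> eqv (u1 + u2) (v1 + v2).
Proof.
move=> h1 h2; have := symkerD h1 h2.
by rewrite /eqv opprD addrACA.
Qed.

Lemma eqv_opp u v : eqv u v -> eqv (- u) (- v).
Proof. by move=> h; rewrite /eqv -opprD; apply: symkerN. Qed.

Lemma eqv_sub u1 u2 v1 v2 : eqv u1 v1 -> eqv u2 v2 -> eqv (u1 - u2) (v1 - v2).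
Proof. by move=> h1 h2; apply: eqv_add => //; apply: eqv_opp. Qed.

Lemma eqv_scale (a : k) u v : eqv u v -> eqv (a *: u) (a *: v).
Proof. by move=> h; rewrite /eqv -scalerBr; apply: symkerZ. Qed.

Lemma eqv_eq u v : u = v -> eqv u v.
Proof. by move=> ->; apply: eqv_refl. Qed.

Lemma eqv_sum (I : Type) (r : seq I) (P : pred I) (F G : I -> M) :
  (forall i, P i -> eqv (F i) (G i)) ->
  eqv (\sum_(i <- r | P i) F i) (\sum_(i <- r | P i) G i).
Proof.
move=> h; apply: (big_ind2 eqv) => //; first exact: eqv_refl.
by move=> *; apply: eqv_add.
Qed.

Lemma eqv_perm s t : perm_eq s t -> eqv (word s) (word t).
Proof. exact: symker_perm. Qed.

Lemma eqv_lin s t (a : k) x y :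
  eqv (word (s ++ (a *: x + y) :: t)) (a *: word (s ++ x :: t) + word (s ++ y :: t)).
Proof. by rewrite /eqv opprD addrA; apply: symker_lin. Qed.

Definition lin (F : seq L -> M) (u : M) : M :=
  \sum_(s <- msupp u) u@_s *: F s.

Lemma linEw F u (d : {fset seq L}) : (msupp u `<=` d)%fset ->
  lin F u = \sum_(s <- d) u@_s *: F s.
Proof.
move=> le; rewrite /lin [LHS](big_fset_incl _ le) => //= x xd /mcoeff_outdom ->.
by rewrite scale0r.
Qed.

Lemma linD F u v : lin F (u + v) = lin F u + lin F v.
Proof.
rewrite (@linEw F (u + v) (msupp u `|` msupp v)%fset) ?msuppD_le //.
rewrite (@linEw F u (msupp u `|` msupp v)%fset) ?fsubsetUl //.
rewrite (@linEw F v (msupp u `|` msupp v)%fset) ?fsubsetUr //.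
by rewrite -big_split /=; apply: eq_bigr => s _; rewrite mcoeffD scalerDl.
Qed.

Lemma linZ F a u : lin F (a *: u) = a *: lin F u.
Proof.
rewrite (@linEw F (a *: u) (msupp u)) ?msuppZ_le // /lin scaler_sumr.
by apply: eq_bigr => s _; rewrite mcoeffZ scalerA.
Qed.

Lemma lin0 F : lin F 0 = 0.
Proof. by rewrite /lin msupp0 big_seq_fset0. Qed.

Lemma linB F u v : lin F (u - v) = lin F u - lin F v.
Proof. by rewrite linD -scaleN1r linZ scaleN1r. Qed.

Lemma linW F s : lin F (word s) = F s.
Proof.
rewrite (@linEw F (word s) [fset s]%fset) ?msuppU_le // big_seq_fset1.
by rewrite /word mcoeffUU scale1r.
Qed.

Lemma lin_sum F (I : Type) (r : seq I) (P : pred I) (G : I -> M) :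
  lin F (\sum_(i <- r | P i) G i) = \sum_(i <- r | P i) lin F (G i).
Proof. by apply: (big_morph (lin F)); [exact: linD | exact: lin0]. Qed.

Lemma lin_symker F :
  (forall s t, perm_eq s t -> eqv (F s) (F t)) ->
  (forall s t a x y, eqv (F (s ++ (a *: x + y) :: t))
                         (a *: F (s ++ x :: t) + F (s ++ y :: t))) ->
  forall u, symker u -> symker (lin F u).
Proof.
move=> hP hL u; elim=> [|x y _ hx _ hy|a x _ hx|s t st|s t a x y].
- by rewrite lin0; apply: symker0.
- by rewrite linD; apply: symkerD.
- by rewrite linZ; apply: symkerZ.
- by rewrite linB !linW; apply: hP.
- rewrite !linB linZ !linW.
  by have := hL s t a x y; rewrite /eqv opprD addrA.
Qed.

Lemma lin_eqv F :
  (forall s t, perm_eq s t -> eqv (F s) (F t)) ->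
  (forall s t a x y, eqv (F (s ++ (a *: x + y) :: t))
                         (a *: F (s ++ x :: t) + F (s ++ y :: t))) ->
  forall u v, eqv u v -> eqv (lin F u) (lin F v).
Proof. by move=> hP hL u v h; rewrite /eqv -linB; apply: lin_symker. Qed.

End Basic.


Section GO1.
Variables (k : fieldType) (L : lmodType k) (pl : L -> L -> L).
Local Notation M := {malg k[seq L]}.
Local Notation word := (@word k L).

Fixpoint mods (f : L -> L) (s : seq L) : seq (seq L) :=
  match s with
  | [::] => [::]
  | x :: s' => (f x :: s') :: map (cons x) (mods f s')
  end.

Lemma act_nil x : Defs.act pl x [::] = x.
Proof. by []. Qed.

Lemma act_one x y : Defs.act pl x [:: y] = pl x y.
Proof. rewrite /Defs.act /= [X in _ - X]big1_seq ?subr0 // => i; by rewrite /index_enum -enumT /= enum_ord0. Qed.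

Lemma mods_iota f a :
  [seq [seq if j == i then f (nth 0 a j) else nth 0 a j | j <- iota 0 (size a)]
    | i <- iota 0 (size a)] = mods f a.
Proof.
elim: a => [//|x a IH] /=.
rewrite -[1%N]/(1 + 0)%N iotaDl -!map_comp /=; congr (_ :: _).
  congr (_ :: _); rewrite -[RHS](mkseq_nth 0) /mkseq.
  by apply: eq_map => j /=; rewrite add0n.
rewrite -IH -map_comp; apply: eq_map => i /=.
rewrite -map_comp /=; congr (_ :: _); apply: eq_map => j /=.
Qed.

Lemma enum_ord1 : enum 'I_1 = [:: ord0].
Proof. by rewrite enum_ordSl enum_ord0. Qed.

Lemma GO_word1 a y :
  GO_word pl a [:: y] = word (y :: a) + \sum_(w <- mods (pl^~ y) a) word w.
Proof.
rewrite /GO_word /=.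
rewrite (reindex (fun g : 'I_(size a).+1 => [ffun _ : 'I_1 => g])) /=; last first.
  exists (fun f : {ffun 'I_1 -> 'I_(size a).+1} => f ord0) => [g _|f _].
    by rewrite ffunE.
  by apply/ffunP => i; rewrite ffunE (ord1 i).
rewrite big_ord_recl; congr (_ + _).
  rewrite /GO_block enum_ord1 /= ffunE /=.
  congr (word (_ :: _)); rewrite -[RHS](mkseq_nth 0) /mkseq.
  by apply: eq_map => i /=.
transitivity (\sum_(i < size a) word [seq if j == nat_of_ord i then pl (nth 0 a j) y else nth 0 a j | j <- iota 0 (size a)]).
  apply: eq_bigr => i _.
  rewrite /GO_block enum_ord1 /= ffunE /=.
  congr word; apply: eq_map => j /=; rewrite /bump /= add1n eqSS.
  by rewrite eq_sym; case: (j == i) => /=; rewrite ?act_one.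
rewrite -mods_iota big_map -(big_mkord (fun _ => true) (fun i => word [seq (if j == i then pl (nth 0 a j) y else nth 0 a j) | j <- iota 0 (size a)])) /index_iota subn0.
by [].
Qed.

End GO1.


Section GOeqv.
Variables (k : fieldType) (L : lmodType k).
Local Notation M := {malg k[seq L]}.
Local Notation word := (@word k L).
Local Notation eqv := (@eqv k L).
Local Notation lin := (@lin k L).
Local Notation mods := (@mods k L).

Lemma mods_cat f s t :
  mods f (s ++ t) = map (cat^~ t) (mods f s) ++ map (cat s) (mods f t).
Proof.
elim: s => [|x s IH] /=; first by rewrite map_id_in.
by rewrite IH map_cat -!map_comp.
Qed.

Definition Ms f s : M := \sum_(w <- mods f s) word w.

Definition Cx (x : L) := lin (fun w => word (x :: w)).

Lemma Cx_eqv x u v : eqv u v -> eqv (Cx x u) (Cx x v).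
Proof.
apply: lin_eqv => [s t st|s t a y z].
  by apply: eqv_perm; rewrite perm_cons.
exact: (eqv_lin (x :: s)).
Qed.

Lemma Cx_Ms x f s : Cx x (Ms f s) = \sum_(w <- mods f s) word (x :: w).
Proof. by rewrite /Cx /Ms lin_sum; apply: eq_bigr => w _; rewrite linW. Qed.

Lemma Ms_cons f x s : Ms f (x :: s) = word (f x :: s) + Cx x (Ms f s).
Proof. by rewrite Cx_Ms /Ms /= big_cons big_map. Qed.

Lemma Ms_split f s z t : Ms f (s ++ z :: t) =
  \sum_(w <- mods f s) word (w ++ z :: t) +
  (word (s ++ f z :: t) + \sum_(w <- mods f t) word (s ++ z :: w)).
Proof. by rewrite /Ms mods_cat big_cat !big_map /= big_cons big_map. Qed.

Lemma Ms_cat f s t : Ms f (s ++ t) =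
  \sum_(w <- mods f s) word (w ++ t) + \sum_(w <- mods f t) word (s ++ w).
Proof. by rewrite /Ms mods_cat big_cat !big_map. Qed.

Lemma Ms_perm f s t : perm_eq s t -> eqv (Ms f s) (Ms f t).
Proof.
elim: s t => [|x s IH] t.
  by move/perm_size; case: t => // _; apply: eqv_refl.
move=> st; have : x \in t by rewrite -(perm_mem st) mem_head.
move=> xt; have [t1 [t2 tE]] : exists t1 t2, t = t1 ++ x :: t2 by case/splitPr: xt => t1 t2; exists t1, t2.
subst t.
have st' : perm_eq s (t1 ++ t2).
  rewrite -(perm_cons x); apply: (perm_trans st).
  by rewrite -cat1s perm_catCA.
rewrite Ms_cons Ms_split.
apply: eqv_trans (eqv_add (eqv_refl _) (Cx_eqv x (IH _ st'))) _.
rewrite Cx_Ms mods_cat big_cat !big_map /=.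
rewrite addrCA; apply: eqv_add.
  by apply: eqv_sum => w _; apply: eqv_perm; rewrite -cat1s perm_catCA.
apply: eqv_add.
  apply: eqv_perm; apply: (@perm_trans _ (f x :: t1 ++ t2)); first by rewrite perm_cons.
  by rewrite -cat1s perm_catCA.
by apply: eqv_sum => w _; apply: eqv_perm; rewrite -cat1s perm_catCA.
Qed.

Lemma regroup (a : k) (A1 B1 C1 A2 B2 C2 : M) :
  a *: (A1 + (B1 + C1)) + (A2 + (B2 + C2)) =
  (a *: A1 + A2) + ((a *: B1 + B2) + (a *: C1 + C2)).
Proof. by rewrite !scalerDr addrACA; congr (_ + _); rewrite addrACA. Qed.

Lemma Ms_lin f (hf : forall (a : k) x y, f (a *: x + y) = a *: f x + f y)
  s t (a : k) x y :
  eqv (Ms f (s ++ (a *: x + y) :: t)) (a *: Ms f (s ++ x :: t) + Ms f (s ++ y :: t)).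
Proof.
rewrite !Ms_split regroup.
apply: eqv_add; [|apply: eqv_add].
- rewrite scaler_sumr -big_split /=; apply: eqv_sum => w _; exact: eqv_lin.
- by rewrite hf; apply: eqv_lin.
- rewrite scaler_sumr -big_split /=; apply: eqv_sum => w _; exact: eqv_lin.
Qed.

Definition Gy f (y : L) s : M := word (y :: s) + Ms f s.

Lemma Gy_perm f y s t : perm_eq s t -> eqv (Gy f y s) (Gy f y t).
Proof.
move=> st; apply: eqv_add; last exact: Ms_perm.
by apply: eqv_perm; rewrite perm_cons.
Qed.

Lemma Gy_lin f (hf : forall (a : k) x y, f (a *: x + y) = a *: f x + f y)
  y s t (a : k) x z :
  eqv (Gy f y (s ++ (a *: x + z) :: t)) (a *: Gy f y (s ++ x :: t) + Gy f y (s ++ z :: t)).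
Proof.
rewrite /Gy scalerDr addrACA; apply: eqv_add; last exact: Ms_lin.
exact: (eqv_lin (y :: s)).
Qed.

End GOeqv.


Section Chains.
Variables (k : fieldType) (L : lmodType k) (pl : L -> L -> L).
Hypothesis pl_linr : forall (a : k) (x y z : L), pl z (a *: x + y) = a *: pl z x + pl z y.
Local Notation M := {malg k[seq L]}.
Local Notation word := (@word k L).
Local Notation lin := (@lin k L).

Lemma GO_prod1 u y : GO_prod pl u (word [:: y]) = lin (Gy (pl^~ y) y) u.
Proof.
rewrite /GO_prod /lin; apply: eq_bigr => s _.
rewrite /word msuppU oner_eq0 big_seq_fset1 mcoeffUU mulr1.
by rewrite GO_word1.
Qed.

Lemma GO_iter_rcons xs y :
  GO_iter pl (rcons xs y) = GO_prod pl (GO_iter pl xs) (word [:: y]).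
Proof. by rewrite /GO_iter foldl_rcons. Qed.

Lemma pl_addr z : {morph pl z : x y / x + y}.
Proof. by move=> x y; have := pl_linr 1 x y z; rewrite !scale1r. Qed.

Lemma pl_0r z : pl z 0 = 0.
Proof.
have := pl_addr z 0 0; rewrite addr0 => /eqP.
by rewrite -subr_eq subrr eq_sym => /eqP.
Qed.

Lemma pl_sumr z (I : Type) (r : seq I) (P : pred I) (F : I -> L) :
  pl z (\sum_(i <- r | P i) F i) = \sum_(i <- r | P i) pl z (F i).
Proof. exact: (big_morph (pl z) (pl_addr z) (pl_0r z)). Qed.

Lemma pl_scaler z (a : k) x : pl z (a *: x) = a *: pl z x.
Proof. by rewrite -[a *: x]addr0 pl_linr pl_0r addr0. Qed.

Definition chn (z : L) (q : nat) (g : nat -> L) : L :=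
  \sum_(s : 'S_q) foldr pl z [seq g (val (s i)) | i <- enum 'I_q].

Lemma chn_ext z q1 q2 g1 g2 : q1 = q2 -> {in gtn q1, g1 =1 g2} ->
  chn z q1 g1 = chn z q2 g2.
Proof.
move=> <- eg; apply: eq_bigr => s _; congr foldr; apply: eq_map => i.
by apply: eg; rewrite inE /=.
Qed.

Lemma chn_rec z q g :
  chn z q.+1 g = \sum_(j < q.+1) pl (g j) (chn z q (fun i => g (bump j i))).
Proof.
rewrite /chn (partition_big (fun s : 'S_q.+1 => s ord0) xpredT) //=.
apply: eq_bigr => j0 _.
rewrite pl_sumr.
rewrite (reindex (lift_perm ord0 j0)); last first.
  pose ulsf i (s : 'S_q.+1) kk := odflt kk (unlift (s i) (s (lift i kk))).
  have ulsfK i (s : 'S_q.+1) kk: lift (s i) (ulsf i s kk) = s (lift i kk).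
    rewrite /ulsf; have:= neq_lift i kk.
    by rewrite -(can_eq (permK s)) => /unlift_some[] ? ? ->.
  have inj_ulsf: injective (ulsf ord0 _).
    move=> s; apply: can_inj (ulsf (s ord0) s^-1%g) _ => k'.
    by rewrite {1}/ulsf ulsfK !permK liftK.
  exists (fun s => perm (inj_ulsf s)) => [s _ | s].
    by apply/permP=> k'; rewrite permE /ulsf lift_perm_lift lift_perm_id liftK.
  move/(s _ =P _) => si0; apply/permP=> kk.
  case: (unliftP ord0 kk) => [k'|] ->; rewrite ?lift_perm_id //.
  by rewrite lift_perm_lift -si0 permE ulsfK.
apply: eq_big => [s | s _]; first by rewrite lift_perm_id eqxx.
rewrite enum_ordSl /= lift_perm_id -map_comp; congr (pl _ (foldr _ _ _)).
by apply: eq_map => i /=; rewrite lift_perm_lift.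
Qed.


End Chains.


Section Filt.
Variable n : nat.

Definition ltI (i j : 'I_n) := (i < j)%N.

Lemma ltI_trans : transitive ltI.
Proof. by move=> x y z; apply: ltn_trans. Qed.

Lemma ltI_irr : irreflexive ltI.
Proof. by move=> x; rewrite /ltI ltnn. Qed.

Lemma sorted_enumI : sorted ltI (enum 'I_n).
Proof.
have := iota_ltn_sorted 0 n; rewrite -val_enum_ord sorted_map.
by [].
Qed.

Lemma filter_max (S : {set 'I_n}) m : m \in S -> (forall i, i \in S -> (i <= m)%N) ->
  [seq i <- enum 'I_n | i \in S] = rcons [seq i <- enum 'I_n | i \in S :\ m] m.
Proof.
move=> mS hS; apply: (irr_sorted_eq ltI_trans ltI_irr).
- exact: (sorted_filter ltI_trans _ sorted_enumI).
- set r := [seq i <- enum 'I_n | i \in S :\ m].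
  have sr : sorted ltI r by exact: (sorted_filter ltI_trans _ sorted_enumI).
  have hr : forall i, i \in r -> ltI i m.
    move=> i; rewrite mem_filter in_setD1 => /andP[/andP[im iS] _].
    by rewrite /ltI ltn_neqAle hS // andbT; apply: contra im => /eqP/val_inj ->.
  case: r sr hr => [|x r'] //= sr hr.
  rewrite rcons_path sr /=; apply: hr.
  by have := mem_last x r'; rewrite inE.
- move=> i; rewrite mem_rcons inE !mem_filter in_setD1 -enumT mem_enum andbT.
  by case: eqP => [->|_] /=; rewrite ?mS // andbT.
Qed.

Definition rem_at (T : Type) (r : seq T) j := take j r ++ drop j.+1 r.

Lemma nth_rem_at (T : Type) (r : seq T) x0 j i : (j < size r)%N ->
  nth x0 (rem_at r j) i = nth x0 r (bump j i).
Proof.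
move=> jr; rewrite /rem_at nth_cat size_take jr /bump.
case: ltnP => ij.
  by rewrite add0n nth_take.
rewrite add1n nth_drop; congr nth.
by rewrite addSn subnKC.
Qed.

Lemma size_rem_at (T : Type) (r : seq T) j : (j < size r)%N ->
  size (rem_at r j) = (size r).-1.
Proof.
move=> jr; rewrite /rem_at size_cat size_take jr size_drop.
by case: (size r) jr => // q; rewrite ltnS => jq; rewrite subSS subnKC.
Qed.

End Filt.

Lemma big_in_filter (R : Type) (idx : R) (op : Monoid.com_law idx) n (A : {set 'I_n}) (F : 'I_n -> R) :
  \big[op/idx]_(x in A) F x = \big[op/idx]_(x <- [seq i <- enum 'I_n | i \in A]) F x.
Proof. by rewrite big_filter big_enum_cond. Qed.


Section LB.
Variables (k : fieldType) (L : lmodType k) (pl : L -> L -> L).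
Hypothesis pl_linr : forall (a : k) (x y z : L), pl z (a *: x + y) = a *: pl z x + pl z y.
Variables (n : nat) (l : 'I_n -> L).
Local Notation lb := (lblock pl l).

Lemma lblock_chn (S : {set 'I_n}) r m : [seq i <- enum 'I_n | i \in S] = rcons r m ->
  lb S = chn pl (l m) (size r) (fun i => l (nth m r i)).
Proof.
rewrite /lblock => ->; case: r => [|x r] //=.
rewrite belast_rcons last_rcons; apply: eq_bigr => s _; congr foldr.
apply: eq_map => i; congr l; apply: set_nth_default.
by rewrite ltn_ord.
Qed.

Lemma filter_rem (S : {set 'I_n}) m r j :
  [seq i <- enum 'I_n | i \in S :\ m] = r -> (j < size r)%N ->
  [seq i <- enum 'I_n | i \in S :\ nth m r j :\ m] = rem_at r j.
Proof.
move=> Er jr.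
have ur : uniq r by rewrite -Er filter_uniq // enum_uniq.
set x := nth m r j.
rewrite /rem_at -(index_uniq m jr ur) -/x -remE rem_filter // -Er.
rewrite [RHS]/= -filter_predI.
apply: eq_filter => i /=; rewrite !in_setD1 /=.
by rewrite andbCA.
Qed.

Lemma lblock_single m : lb [set m] = l m.
Proof.
rewrite (@lblock_chn _ [::] m); last first.
  rewrite (@filter_max _ _ m) ?set11 //; last by move=> i /set1P ->.
  congr rcons; rewrite setDv (@eq_filter _ _ pred0) ?filter_pred0 // => i.
  by rewrite in_set0.
rewrite /chn /= (big_pred1 1%g) => [|s]; first by rewrite enum_ord0.
by apply/esym/eqP/permP => -[].
Qed.


Lemma lblock_rec (S : {set 'I_n}) m : m \in S -> (forall i, i \in S -> (i <= m)%N) ->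
  lb S = (if S == [set m] then l m else 0) + \sum_(x in S :\ m) pl (l x) (lb (S :\ x)).
Proof.
move=> mS hS; case: eqP => [->|nSm].
  by rewrite lblock_single setDv big_set0 addr0.
rewrite add0r.
set r := [seq i <- enum 'I_n | i \in S :\ m].
have E := filter_max mS hS.
rewrite (lblock_chn E).
have rn : r != [::].
  apply: contra_notN nSm => /eqP r0; apply/eqP; rewrite eqEsubset sub1set mS andbT.
  apply/subsetP => x xS; rewrite inE; apply/negPn/negP => xm.
  have : x \in r by rewrite mem_filter in_setD1 xm xS mem_enum.
  by rewrite r0.
case Es: (size r) rn => [|q] rn; first by move: rn; rewrite -size_eq0 Es.
rewrite chn_rec //.
rewrite big_in_filter -/r (big_nth m) big_mkord Es.
apply: eq_bigr => j _; congr (pl _ _).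
have jr : (j < size r)%N by rewrite Es.
have xr : nth m r j \in r by rewrite mem_nth.
have xm : nth m r j != m by move: xr; rewrite mem_filter in_setD1 => /andP[/andP[]].
rewrite (@lblock_chn _ (rem_at r j) m); last first.
  rewrite (@filter_max _ _ m); first by rewrite (filter_rem (erefl r)).
    by rewrite in_setD1 eq_sym xm mS.
  by move=> i; rewrite in_setD1 => /andP[_ /hS].
apply: chn_ext; first by rewrite size_rem_at // Es.
by move=> i _ /=; rewrite nth_rem_at.
Qed.

End LB.


Section Comb.
Variables (k : fieldType) (L : lmodType k) (pl : L -> L -> L).
Hypothesis pl_linl : forall (a : k) (x y z : L), pl (a *: x + y) z = a *: pl x z + pl y z.
Hypothesis pl_linr : forall (a : k) (x y z : L), pl z (a *: x + y) = a *: pl z x + pl z y.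
Variables (n : nat) (l : 'I_n -> L).
Local Notation M := {malg k[seq L]}.
Local Notation word := (@word k L).
Local Notation eqv := (@eqv k L).
Local Notation lb := (lblock pl l).

Definition W (x : L) (C : {set 'I_n}) : M := word (x :: [seq l i | i <- enum C]).

Lemma Wlin a x y C : eqv (W (a *: x + y) C) (a *: W x C + W y C).
Proof. exact: (@eqv_lin _ _ [::]). Qed.

Lemma eqv0 (u : M) : eqv u (u + u) -> eqv u 0.
Proof.
move=> h; have := symkerN h; rewrite opprB addrK.
by rewrite /eqv subr0.
Qed.

Lemma W0 C : eqv (W 0 C) 0.
Proof. by apply: eqv0; have := Wlin 1 0 0 C; rewrite !scale1r addr0. Qed.

Lemma WD x y C : eqv (W (x + y) C) (W x C + W y C).
Proof. by have := Wlin 1 x y C; rewrite !scale1r. Qed.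

Lemma WZ a x C : eqv (W (a *: x) C) (a *: W x C).
Proof.
have := Wlin a x 0 C; rewrite addr0 => h.
apply: eqv_trans h _; rewrite -[X in eqv _ X]addr0.
by apply: eqv_add; [apply: eqv_refl | apply: W0].
Qed.

Lemma Wsum (I : Type) (r : seq I) (P : pred I) (v : I -> L) C :
  eqv (W (\sum_(i <- r | P i) v i) C) (\sum_(i <- r | P i) W (v i) C).
Proof.
apply: (big_ind2 (fun x y => eqv (W x C) y)); first exact: W0.
  move=> x1 y1 x2 y2 h1 h2; apply: eqv_trans (WD _ _ _) _.
  exact: eqv_add.
by move=> i _; apply: eqv_refl.
Qed.

Lemma eqv_sum_seq (I : eqType) (r : seq I) (F G : I -> M) :
  (forall i, i \in r -> eqv (F i) (G i)) ->
  eqv (\sum_(i <- r) F i) (\sum_(i <- r) G i).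
Proof.
move=> h; rewrite big_seq [X in eqv _ X]big_seq; apply: eqv_sum => i; exact: h.
Qed.

Lemma swap2 (T : eqType) (a b : T) s : perm_eq [:: a, b & s] [:: b, a & s].
Proof. by rewrite -[[:: a, b & s]]/([:: a] ++ [:: b] ++ s) perm_catCA. Qed.

Lemma Ms_map f (e : seq 'I_n) :
  eqv (Ms f [seq l i | i <- e])
      (\sum_(y <- e) word (f (l y) :: [seq l i | i <- rem y e])).
Proof.
elim: e => [|x e IH] /=; first by rewrite /Ms /= !big_nil; apply: eqv_refl.
rewrite Ms_cons big_cons eqxx; apply: eqv_add; first exact: eqv_refl.
apply: eqv_trans (Cx_eqv (l x) IH) _.
rewrite /Cx lin_sum; apply: eqv_sum_seq => y ye; rewrite linW.
apply: eqv_perm => /=.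
apply: perm_trans (swap2 _ _ _) _.
rewrite perm_cons; case: eqP => [xy|_] //=; subst y.
by have := perm_to_rem ye; rewrite perm_sym => h; have := perm_map l h.
Qed.

Lemma G_set y (C : {set 'I_n}) :
  eqv (Gy (pl^~ y) y [seq l i | i <- enum C])
      (W y C + \sum_(x in C) W (pl (l x) y) (C :\ x)).
Proof.
apply: eqv_add; first exact: eqv_refl.
apply: eqv_trans (Ms_map _ _) _.
rewrite -[X in eqv _ X]big_enum /=.
apply: eqv_sum_seq => x xC; apply: eqv_perm; rewrite perm_cons perm_map //.
apply: uniq_perm; rewrite ?rem_uniq ?enum_uniq // => i.
by rewrite mem_rem_uniq ?enum_uniq // !inE !mem_enum in_setD1.
Qed.

Lemma setU1D1 (x : 'I_n) (B : {set 'I_n}) : ((x |: B) :\ x == B) = (x \notin B).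
Proof.
apply/eqP/idP => [<-|xB]; first by rewrite !inE eqxx.
exact: setU1K.
Qed.

Lemma R1 (A : {set 'I_n}) (m : 'I_n) (H : {set 'I_n} -> 'I_n -> M) :
  \sum_(B : {set 'I_n} | (m \in B) && (B \subset A)) \sum_(x in A :\: B) H B x =
  \sum_(S : {set 'I_n} | (m \in S) && (S \subset A)) \sum_(x in S :\ m) H (S :\ x) x.
Proof.
rewrite (exchange_big_dep xpredT) // [RHS](exchange_big_dep xpredT) //.
apply: eq_bigr => x _.
rewrite [RHS](reindex_onto (fun B => x |: B) (fun S => S :\ x)) /=; last first.
  by move=> S /andP[_]; rewrite in_setD1 => /andP[_ xS]; rewrite setD1K.
apply: eq_big => [B|B]; last first.
  by move=> /andP[_]; rewrite in_setD => /andP[xB _]; rewrite setU1K.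
rewrite setU1D1 in_setD in_setU1 subUset sub1set in_setD1 setU11 andbT.
case xB: (x \in B); case mB: (m \in B); case: (x \in A); case: (B \subset A);
  rewrite ?andbF ?andbT ?orbT ?orbF //=.
  by case: eqP => // xm; subst x; rewrite mB in xB.
by case: eqP => // ->; rewrite eqxx.
Qed.

Lemma card_ge2 (S : {set 'I_n}) m : m \in S -> S != [set m] -> (1 < #|S|)%N.
Proof.
move=> mS nS; rewrite (cardsD1 m S) mS add1n ltnS card_gt0.
apply: contraNneq nS => h; apply/eqP/setP => i; rewrite inE.
case: eqP => [->|ne]; first by rewrite mS.
by apply/negbTE; apply: contraT; rewrite negbK => iS; have := in_set0 i; rewrite -h in_setD1 iS andbT; case: eqP.
Qed.

Lemma perS (A S : {set 'I_n}) (m : 'I_n) : (forall i, i \in A -> (i <= m)%N) ->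
  m \in S -> S \subset A ->
  eqv ((-1) ^+ (#|S|.-1) *: W (lb S) (A :\: S) +
       \sum_(x in S :\ m) (-1) ^+ (#|S :\ x|.-1) *: W (pl (l x) (lb (S :\ x))) (A :\: (S :\ x) :\ x))
      (if S == [set m] then W (l m) (A :\ m) else 0).
Proof.
move=> hA mS SA; have hS : forall i, i \in S -> (i <= m)%N by move=> i /(subsetP SA) /hA.
case: eqP => [->|/eqP nS].
  rewrite setDv big_set0 addr0 cards1 /= expr0 scale1r lblock_single.
  exact: eqv_refl.
have cS := card_ge2 mS nS.
set c : k := (-1) ^+ ((#|S|.-1).-1).
rewrite (eq_bigr (fun x => c *: W (pl (l x) (lb (S :\ x))) (A :\: S))); last first.
  move=> x; rewrite in_setD1 => /andP[_ xS].
  rewrite /c (cardsD1 x S) xS add1n /=; congr (_ *: W _ _).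
  apply/setP => i; rewrite !inE; case: eqP => [->|] //=.
  by rewrite xS.
rewrite -scaler_sumr.
have E : \sum_(x in S :\ m) pl (l x) (lb (S :\ x)) = lb S.
  by rewrite (lblock_rec pl_linr l mS hS) (negbTE nS) add0r.
apply: eqv_trans (eqv_add (eqv_refl _) (eqv_scale c (eqv_sym (Wsum _ _ _ _)))) _.
rewrite E -scalerDl /c.
case: #|S| cS => [|[|q]] // _ /=.
rewrite exprS mulN1r addNr scale0r; exact: eqv_refl.
Qed.

Lemma comb (A : {set 'I_n}) (m : 'I_n) : m \in A -> (forall i, i \in A -> (i <= m)%N) ->
  eqv (\sum_(B : {set 'I_n} | (m \in B) && (B \subset A))
         (-1) ^+ (#|B|.-1) *: Gy (pl^~ (lb B)) (lb B) [seq l i | i <- enum (A :\: B)])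
      (W (l m) (A :\ m)).
Proof.
move=> mA hA.
have step1 : eqv (\sum_(B : {set 'I_n} | (m \in B) && (B \subset A))
         (-1) ^+ (#|B|.-1) *: Gy (pl^~ (lb B)) (lb B) [seq l i | i <- enum (A :\: B)])
  (\sum_(B : {set 'I_n} | (m \in B) && (B \subset A))
         (-1) ^+ (#|B|.-1) *: (W (lb B) (A :\: B) +
            \sum_(x in A :\: B) W (pl (l x) (lb B)) (A :\: B :\ x))).
  by apply: eqv_sum => B _; apply: eqv_scale; apply: G_set.
apply: eqv_trans step1 _.
under eq_bigr => B _ do rewrite scalerDr scaler_sumr.
rewrite big_split /=.
rewrite (R1 A m (fun B x => (-1) ^+ (#|B|.-1) *: W (pl (l x) (lb B)) (A :\: B :\ x))).
rewrite -big_split /=.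
apply: (@eqv_trans _ _ _ (\sum_(S : {set 'I_n} | (m \in S) && (S \subset A))
   (if S == [set m] then W (l m) (A :\ m) else 0))).
  by apply: eqv_sum => S /andP[mS SA]; apply: perS.
rewrite -big_mkcondr /= (big_pred1 [set m]); first exact: eqv_refl.
move=> S /=; case: eqP => [->|]; last by rewrite andbF.
by rewrite set11 sub1set mA.
Qed.

End Comb.


Section Parts.
Variable n : nat.

Lemma decomp (R : Type) (idx : R) (op : Monoid.com_law idx) (A : {set 'I_n}) (m : 'I_n)
  (F : {set {set 'I_n}} -> R) : m \in A ->
  \big[op/idx]_(P : {set {set 'I_n}} | partition P A) F P =
  \big[op/idx]_(B : {set 'I_n} | (m \in B) && (B \subset A))
     \big[op/idx]_(Q : {set {set 'I_n}} | partition Q (A :\: B)) F (B |: Q).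
Proof.
move=> mA.
rewrite (partition_big (fun P => pblock P m) (fun B => (m \in B) && (B \subset A))); last first.
  move=> P pP; have mc : m \in cover P by rewrite (cover_partition pP).
  by rewrite mem_pblock mc (partitionS pP) // pblock_mem.
apply: eq_bigr => B /andP[mB BA].
rewrite (reindex_onto (fun Q => B |: Q) (fun P => P :\ B)) /=; last first.
  move=> P /andP[pP /eqP <-]; rewrite setD1K // pblock_mem //.
  by rewrite (cover_partition pP).
apply: eq_bigl => Q; apply/idP/idP.
  case/andP=> /andP[pP _] /eqP <-.
  by apply: partitionD1 => //; rewrite setU11.
move=> pQ.
have BQ : B \notin Q.
  apply/negP => /(partitionS pQ) /subsetP /(_ m mB); by rewrite in_setD mB.
have pBQ : partition (B |: Q) A.
  have e : B :|: A :\: B = A by rewrite -{2}(setID A B) (setIidPr BA).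
  rewrite -[in X in partition _ X]e; apply: partitionU1 => //.
    by apply/set0Pn; exists m.
  by rewrite -setI_eq0; apply/eqP/setP => x; rewrite !inE; case: (x \in B); rewrite ?andbF.
rewrite pBQ /= setU1K // eqxx andbT.
by rewrite (def_pblock (partition_trivIset pBQ) (setU11 B Q) mB) eqxx.
Qed.

Lemma pU1 (A B : {set 'I_n}) (Q : {set {set 'I_n}}) (m : 'I_n) :
  m \in B -> B \subset A -> partition Q (A :\: B) ->
  partition (B |: Q) A /\ B \notin Q.
Proof.
move=> mB BA pQ.
have BQ : B \notin Q.
  apply/negP => /(partitionS pQ) /subsetP /(_ m mB); by rewrite in_setD mB.
split=> //.
have e : B :|: A :\: B = A by rewrite -{2}(setID A B) (setIidPr BA).
rewrite -[in X in partition _ X]e; apply: partitionU1 => //.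
  by apply/set0Pn; exists m.
by rewrite -setI_eq0; apply/eqP/setP => x; rewrite !inE; case: (x \in B); rewrite ?andbF.
Qed.

Lemma blockmax_le (C : {set 'I_n}) (m : nat) :
  (forall i : 'I_n, i \in C -> (i <= m)%N) -> (blockmax C <= m)%N.
Proof. by move=> h; apply/bigmax_leqP => i; apply: h. Qed.

Lemma blockmax_ge (C : {set 'I_n}) (i : 'I_n) : i \in C -> (i <= blockmax C)%N.
Proof. by move=> iC; apply: (leq_bigmax_cond (F := fun j : 'I_n => val j)). Qed.

Lemma blockmax_mem (C : {set 'I_n}) : C != set0 -> exists2 i : 'I_n, i \in C & blockmax C = i.
Proof.
rewrite -card_gt0 => /(eq_bigmax_cond (fun j : 'I_n => val j)) [i iC e].
by exists i.
Qed.

Lemma sorted_rcons_le (T : eqType) (r : rel T) (s : seq T) x :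
  sorted r s -> (forall y, y \in s -> r y x) -> sorted r (rcons s x).
Proof.
case: s => //= y s' ss h; rewrite rcons_path ss /=; apply: h.
exact: mem_last.
Qed.

Lemma sorted_blocksU1 (A B : {set 'I_n}) (Q : {set {set 'I_n}}) (m : 'I_n) :
  (forall i, i \in A -> (i <= m)%N) -> m \in B -> B \subset A -> partition Q (A :\: B) ->
  sorted_blocks (B |: Q) = rcons (sorted_blocks Q) B.
Proof.
move=> hA mB BA pQ; have [pBQ BQ] := pU1 mB BA pQ.
rewrite /sorted_blocks.
set r := (fun C D : {set 'I_n} => (blockmax C <= blockmax D)%N).
have tot : total r by move=> x y; apply: leq_total.
have tr : transitive r by move=> y x z; apply: leq_trans.
have bB : blockmax B = m.
  apply/anti_leq; rewrite blockmax_ge // andbT; apply: blockmax_le => i /(subsetP BA).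
  exact: hA.
set s := sort r (enum Q).
have ss : sorted r (rcons s B).
  apply: sorted_rcons_le; first exact: sort_sorted.
  move=> C; rewrite mem_sort mem_enum => CQ; rewrite /r bB; apply: blockmax_le => i.
  by move/(subsetP (partitionS pQ CQ)); rewrite in_setD => /andP[_ /hA].
rewrite -[RHS](sorted_sort tr ss).
apply/(perm_sort_inP (rcons s B) (in2W tot) (in3W tr)).
  move=> C1 C2; rewrite !mem_enum => C1in C2in /andP[h1 h2].
  have e : blockmax C1 = blockmax C2 by apply/anti_leq; apply/andP; split.
  have [i1 i1C e1] := blockmax_mem (partition_neq0 pBQ C1in).
  have [i2 i2C e2] := blockmax_mem (partition_neq0 pBQ C2in).
  have ii : i1 = i2 by apply/val_inj; rewrite /= -e1 -e2.
  case: (eqVneq C1 C2) => // ne.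
  move/trivIsetP: (partition_trivIset pBQ) => tI; have := tI C1 C2 C1in C2in ne.
  rewrite -setI_eq0 => /eqP/setP/(_ i1); rewrite !inE i1C ii i2C.
  by [].
apply: uniq_perm; rewrite ?enum_uniq // ?rcons_uniq ?sort_uniq ?enum_uniq ?mem_sort ?mem_enum ?BQ //.
by move=> C; rewrite mem_rcons inE mem_sort !mem_enum in_setU1.
Qed.

End Parts.


Section Sign.
Variable n : nat.

Lemma card_part_le (Q : {set {set 'I_n}}) D : partition Q D -> (#|Q| <= #|D|)%N.
Proof.
move=> pQ; rewrite (card_partition pQ) -sum1_card leq_sum // => C CQ.
by rewrite card_gt0 (partition_neq0 pQ CQ).
Qed.

Lemma sign_split (A B : {set 'I_n}) (Q : {set {set 'I_n}}) (m : 'I_n) :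
  m \in B -> B \subset A -> partition Q (A :\: B) -> B \notin Q ->
  (#|A| - #|B |: Q| = #|B|.-1 + (#|A :\: B| - #|Q|))%N.
Proof.
move=> mB BA pQ BQ.
have h1 := card_part_le pQ.
have h2 : #|A :\: B| = (#|A| - #|B|)%N by rewrite cardsD (setIidPr BA).
have h3 : (#|B| <= #|A|)%N by apply: subset_leq_card.
have h4 : (0 < #|B|)%N by rewrite card_gt0; apply/set0Pn; exists m.
rewrite cardsU1 BQ /=.
rewrite -subn1 h2; rewrite h2 in h1; move: h1 h3 h4; move: #|A| #|B| #|Q| => a b q; lia.
Qed.

End Sign.

Section Main.
Variables (k : fieldType) (L : lmodType k) (pl : L -> L -> L).
Hypothesis pl_linl : forall (a : k) (x y z : L), pl (a *: x + y) z = a *: pl x z + pl y z.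
Hypothesis pl_linr : forall (a : k) (x y z : L), pl z (a *: x + y) = a *: pl z x + pl z y.
Variables (n : nat) (l : 'I_n -> L).
Local Notation M := {malg k[seq L]}.
Local Notation word := (@word k L).
Local Notation eqv := (@eqv k L).
Local Notation lb := (lblock pl l).

Lemma main_set (A : {set 'I_n}) :
  eqv (word [seq l i | i <- enum A])
      (\sum_(P : {set {set 'I_n}} | partition P A)
         (-1) ^+ (#|A| - #|P|) *: GO_iter pl [seq lb C | C <- sorted_blocks P]).
Proof.
have [N] := ubnP #|A|; elim: N A => // N IH A /ltnSE cA.
case: (set_0Vmem A) => [->|[m0 m0A]].
  rewrite (big_pred1 set0); last by move=> P; rewrite partition_set0.
  rewrite cards0 /sorted_blocks !enum_set0 /= expr0 scale1r; exact: eqv_refl.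
case: (arg_maxnP (fun i : 'I_n => val i) m0A) => m mA hm.
rewrite (decomp _ _ mA).
have step : forall B : {set 'I_n}, (m \in B) && (B \subset A) ->
  \sum_(Q : {set {set 'I_n}} | partition Q (A :\: B))
     (-1) ^+ (#|A| - #|B |: Q|) *: GO_iter pl [seq lb C | C <- sorted_blocks (B |: Q)] =
  (-1) ^+ (#|B|.-1) *: lin (Gy (pl^~ (lb B)) (lb B))
     (\sum_(Q : {set {set 'I_n}} | partition Q (A :\: B))
        (-1) ^+ (#|A :\: B| - #|Q|) *: GO_iter pl [seq lb C | C <- sorted_blocks Q]).
  move=> B /andP[mB BA].
  rewrite lin_sum scaler_sumr; apply: eq_bigr => Q pQ.
  have [_ BQ] := pU1 mB BA pQ.
  rewrite (sorted_blocksU1 hm mB BA pQ) map_rcons GO_iter_rcons GO_prod1 linZ scalerA -exprD.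
  by rewrite (sign_split mB BA pQ BQ).
rewrite (eq_bigr _ step).
have wp : eqv (word [seq l i | i <- enum A]) (W l (l m) (A :\ m)).
  apply: eqv_perm; rewrite /W -map_cons; apply: perm_map.
  apply: (perm_trans (perm_to_rem (_ : m \in enum A))); first by rewrite mem_enum.
  rewrite perm_cons; apply: uniq_perm; rewrite ?rem_uniq ?enum_uniq // => i.
  by rewrite mem_rem_uniq ?enum_uniq // !inE !mem_enum in_setD1.
apply: eqv_trans wp _; apply: eqv_sym.
apply: eqv_trans (comb pl_linr l mA hm).
apply: eqv_sum => B /andP[mB BA]; apply: eqv_scale.
rewrite -linW; apply: lin_eqv.
- by move=> s t st; apply: Gy_perm.
- by move=> s t a x y; apply: Gy_lin => a' x' y'; apply: pl_linl.
apply: eqv_sym; apply: IH.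
have h4 : (0 < #|B|)%N by rewrite card_gt0; apply/set0Pn; exists m.
rewrite cardsD (setIidPr BA).
have h5 : (0 < #|A|)%N by rewrite card_gt0; apply/set0Pn; exists m.
by move: cA h4 h5; move: #|A| #|B| => a b; lia.
Qed.

End Main.

Unset Implicit Arguments.

Theorem proposition2p1 (k : fieldType) (L : lmodType k) (pl : L -> L -> L)
  (k_char0 : [pchar k] =i pred0)
  (pl_linl : forall (a : k) (x y z : L), pl (a *: x + y) z = a *: pl x z + pl y z)
  (pl_linr : forall (a : k) (x y z : L), pl z (a *: x + y) = a *: pl z x + pl z y)
  (pl_prelie : forall x y z : L,
      pl (pl x y) z - pl x (pl y z) = pl (pl x z) y - pl x (pl z y))
  (n : nat) (l : 'I_n -> L) :
  symker
    (word [seq l i | i <- enum 'I_n]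
     - \sum_(P : {set {set 'I_n}} | partition P [set: 'I_n])
         (-1) ^+ (n - #|P|) *:
           GO_iter pl [seq lblock pl l A | A <- sorted_blocks P]).
Proof.
have := main_set pl_linl pl_linr l [set: 'I_n].
rewrite cardsT card_ord => h; apply: eqv_trans h.
apply: eqv_perm; apply: perm_map; apply: uniq_perm; rewrite ?enum_uniq // => i.
by rewrite [RHS]mem_enum in_setT mem_enum.
Qed.
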